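(* Let $X,Y$ be metrizable vector spaces over $K$ with metrics $d_X,d_Y$. If $Y$ is complete, then $[B_d(X,Y),d]$ is a complete metric space.
   Context: $K$ is $\mathbb{R}$ or $\mathbb{C}$. For maps $F_1,F_2:X\to Y$, $d(F_1,F_2)=\max\left\{\sup_{x\neq0,x\in X}\frac{d_Y[F_1(x),F_2(x)]}{d_X(x,0)},\ d_Y[F_1(0),F_2(0)]\right\}\in[0,\infty]$, and $B_d(X,Y)$ is the set of maps $F:X\to Y$ with $d(F,0)<\infty$; $d$ is a metric on $B_d(X,Y)$. *)

(* Defs.v *)
From HB Require Import structures.
From mathcomp Require Import all_boot all_order all_algebra.
From mathcomp Require Import boolp classical_sets reals constructive_ereal ereal.
From mathcomp Require complex.
Import complex.ComplexField.
Set Implicit Arguments. Unset Strict Implicit. Unset Printing Implicit Defensive.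
Import Order.TTheory GRing.Theory Num.Theory.
Local Open Scope ring_scope.
Local Open Scope classical_set_scope.

Definition scalars (R : realType) (b : bool) : numFieldType :=
  if b then (complex.complex R : numFieldType) else (R : numFieldType).

Definition absK (R : realType) (b : bool) : scalars R b -> R :=
  if b as b' return scalars R b' -> R then @Normc.normc R
  else (fun x : R => `|x|).

Definition is_metric (R : realType) (T : Type) (d : T -> T -> R) : Prop :=
  [/\ (forall x y, 0 <= d x y),
      (forall x y, d x y = 0 <-> x = y),
      (forall x y, d x y = d y x) &
      (forall x y z, d x z <= d x y + d y z)].

Definition metric_vs (R : realType) (b : bool) (X : lmodType (scalars R b))
    (d : X -> X -> R) : Prop :=
  [/\ is_metric d,
      (forall x y e, 0 < e -> exists2 del, 0 < del &
          forall x' y', d x x' < del -> d y y' < del -> d (x + y) (x' + y') < e) &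
      (forall (a : scalars R b) x e, 0 < e -> exists2 del, 0 < del &
          forall (a' : scalars R b) x', absK (a - a') < del -> d x x' < del ->
            d (a *: x) (a' *: x') < e)].

Definition cauchy_seq (R : realType) (T : Type) (d : T -> T -> R) (u : nat -> T) :=
  forall e, 0 < e -> exists N, forall m n, (N <= m)%N -> (N <= n)%N -> d (u m) (u n) < e.
Definition converges_to (R : realType) (T : Type) (d : T -> T -> R) (u : nat -> T) (l : T) :=
  forall e, 0 < e -> exists N, forall n, (N <= n)%N -> d (u n) l < e.
Definition complete_metric (R : realType) (T : Type) (d : T -> T -> R) : Prop :=
  forall u, cauchy_seq d u -> exists l, converges_to d u l.

Section MapDist.
Context (R : realType) (b : bool) (X Y : lmodType (scalars R b))
        (dX : X -> X -> R) (dY : Y -> Y -> R).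

Definition dmap (F1 F2 : X -> Y) : \bar R :=
  Order.max (ereal_sup [set ((dY (F1 x) (F2 x)) / dX x 0)%:E | x in [set x | x != 0]])
            ((dY (F1 0) (F2 0))%:E).

Definition Bd : set (X -> Y) := [set F | (dmap F (fun=> 0%R) < +oo)%E].
End MapDist.

Definition Bd_complete_metric_space (R : realType) (b : bool)
    (X Y : lmodType (scalars R b)) (dX : X -> X -> R) (dY : Y -> Y -> R) : Prop :=
  let B := Bd dX dY in
  let d := dmap dX dY in
  [/\ (forall F1 F2, B F1 -> B F2 -> (0 <= d F1 F2 < +oo)%E),
      (forall F1 F2, B F1 -> B F2 -> d F1 F2 = 0%E <-> F1 = F2),
      (forall F1 F2, B F1 -> B F2 -> d F1 F2 = d F2 F1),
      (forall F1 F2 F3, B F1 -> B F2 -> B F3 -> (d F1 F3 <= d F1 F2 + d F2 F3)%E) &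
      (forall u : nat -> X -> Y, (forall n, B (u n)) ->
         (forall e : R, 0 < e -> exists N, forall m n, (N <= m)%N -> (N <= n)%N ->
             (d (u m) (u n) < e%:E)%E) ->
         exists2 l, B l & forall e : R, 0 < e -> exists N, forall n, (N <= n)%N ->
             (d (u n) l < e%:E)%E)].

(* Main.v *)
Require Import Defs.
From HB Require Import structures.
From mathcomp Require Import all_boot all_order all_algebra.
From mathcomp Require Import boolp classical_sets reals constructive_ereal ereal.
From mathcomp Require Import ring lra.
Import Order.TTheory GRing.Theory Num.Theory.
Local Open Scope ring_scope.

Section Aux.
Context (R : realType) (b : bool) (X Y : lmodType (scalars R b))
        (dX : X -> X -> R) (dY : Y -> Y -> R).
Hypothesis mX : is_metric dX.
Hypothesis mY : is_metric dY.

Lemma dX_pos (x : X) : x != 0 -> 0 < dX x 0.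
Proof.
case: mX => h0 hE _ _ nx; rewrite lt_def h0 andbT; apply/eqP => /hE E.
by rewrite E eqxx in nx.
Qed.

Lemma dmap_ub (F1 F2 : X -> Y) x : x != 0 ->
  ((dY (F1 x) (F2 x) / dX x 0)%:E <= dmap dX dY F1 F2)%E.
Proof.
move=> nx; rewrite /dmap le_max; apply/orP; left.
by apply: ereal_sup_ubound; exists x.
Qed.

Lemma dmap_ub0 (F1 F2 : X -> Y) :
  ((dY (F1 0) (F2 0))%:E <= dmap dX dY F1 F2)%E.
Proof. by rewrite /dmap le_max lexx orbT. Qed.

Lemma dmap_ge0 (F1 F2 : X -> Y) : (0 <= dmap dX dY F1 F2)%E.
Proof.
apply: le_trans (dmap_ub0 F1 F2); rewrite lee_fin; case: mY => h _ _ _; exact: h.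
Qed.

Lemma dmap_le (F1 F2 : X -> Y) (c : R) :
  (dmap dX dY F1 F2 <= c%:E)%E <->
  (forall x, x != 0 -> dY (F1 x) (F2 x) <= c * dX x 0) /\ dY (F1 0) (F2 0) <= c.
Proof.
split.
  move=> H; split; last by have := le_trans (dmap_ub0 F1 F2) H; rewrite lee_fin.
  move=> x nx; rewrite -ler_pdivrMr; last exact: dX_pos.
  by have := le_trans (dmap_ub F1 F2 x nx) H; rewrite lee_fin.
case=> H1 H2; rewrite /dmap ge_max lee_fin H2 andbT.
apply: ge_ereal_sup => _ [x /= nx <-]; rewrite lee_fin ler_pdivrMr; last exact: dX_pos.
exact: H1.
Qed.

Lemma dmap_cases (F1 F2 : X -> Y) :
  dmap dX dY F1 F2 = +oo%E \/ exists2 c, 0 <= c & dmap dX dY F1 F2 = c%:E.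
Proof.
have := dmap_ge0 F1 F2; case: (dmap dX dY F1 F2) => [r| |] //.
- by rewrite lee_fin => h; right; exists r.
- by left.
Qed.

Lemma dmap_pt (F1 F2 : X -> Y) (c : R) x : 0 <= c ->
  (dmap dX dY F1 F2 <= c%:E)%E -> dY (F1 x) (F2 x) <= c * (dX x 0 + 1).
Proof.
move=> c0 /dmap_le [H1 H2].
have d0 : 0 <= dX x 0 by case: mX => h _ _ _; exact: h.
have [->|nx] := eqVneq x 0.
  apply: le_trans H2 _; rewrite -[Z in Z <= _]mulr1 ler_wpM2l // ?lerDl ?lerDr //; by case: mX.
apply: le_trans (H1 _ nx) _; rewrite ler_wpM2l // ?lerDl ?lerDr //.
Qed.

Lemma eq_ge_le_ (a : \bar R) (r : R) : a = r%:E -> (a <= r%:E)%E.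
Proof. by move=> ->. Qed.

Lemma dmap_tri (F1 F2 F3 : X -> Y) :
  (dmap dX dY F1 F3 <= dmap dX dY F1 F2 + dmap dX dY F2 F3)%E.
Proof.
case: (dmap_cases F1 F2) => [->|[r r0 E12]].
  have [->|[s s0 ->]] := dmap_cases F2 F3; by rewrite ?leey.
case: (dmap_cases F2 F3) => [->|[s s0 E23]]; first by rewrite E12 leey.
have [H1 H2] := (dmap_le F1 F2 r).1 (eq_ge_le_ _ _ E12).
have [K1 K2] := (dmap_le F2 F3 s).1 (eq_ge_le_ _ _ E23).
have tri := match mY with And4 _ _ _ t => t end.
rewrite E12 E23 -EFinD; apply/dmap_le; split.
  move=> x nx; rewrite mulrDl; apply: le_trans (tri _ (F2 x) _) _.
  exact: lerD (H1 _ nx) (K1 _ nx).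
by apply: le_trans (tri _ (F2 0) _) _; exact: lerD.
Qed.


Lemma dmap_sym_le (F1 F2 : X -> Y) : (dmap dX dY F1 F2 <= dmap dX dY F2 F1)%E.
Proof.
case: (dmap_cases F2 F1) => [->|[c c0 E]]; first by rewrite leey.
have [H1 H2] := (dmap_le F2 F1 c).1 (eq_ge_le_ _ _ E).
have sym := match mY with And4 _ _ s _ => s end.
rewrite E; apply/dmap_le; split => [x nx|]; rewrite sym //; exact: H1.
Qed.

Lemma dmap_sym (F1 F2 : X -> Y) : dmap dX dY F1 F2 = dmap dX dY F2 F1.
Proof. by apply/le_anti; rewrite !dmap_sym_le. Qed.

Lemma dmap_eq0 (F1 F2 : X -> Y) : dmap dX dY F1 F2 = 0%E <-> F1 = F2.
Proof.
have [h0 hE _ _] := mY.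
split.
  move=> E; have [H1 H2] := (dmap_le F1 F2 0).1 (eq_ge_le_ _ _ E).
  apply: funext => x; apply/hE; apply/le_anti; rewrite h0 andbT.
  have [->|nx] := eqVneq x 0; first exact: H2.
  by have := H1 _ nx; rewrite mul0r.
move=> <-; apply/le_anti; rewrite dmap_ge0 andbT.
apply/dmap_le; split => [x nx|]; by rewrite (proj2 (hE _ _)) ?mul0r.
Qed.

Lemma lim_le (v : nat -> Y) (L a : Y) (K : R) (N : nat) :
  converges_to dY v L -> (forall m, (N <= m)%N -> dY a (v m) <= K) -> dY a L <= K.
Proof.
move=> Hl H; apply/ler_addgt0Pr => e e0.
have [M HM] := Hl e e0.
have tri := match mY with And4 _ _ _ t => t end.
apply: le_trans (tri a (v (maxn N M)) L) _; apply: lerD.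
  by apply: H; rewrite leq_maxl.
by apply/ltW/HM; rewrite leq_maxr.
Qed.

End Aux.

Arguments dmap_tri {R b X Y dX dY}.
Arguments dmap_sym {R b X Y dX dY}.
Arguments dmap_ge0 {R b X Y dX dY}.
Arguments dmap_eq0 {R b X Y dX dY}.
Arguments dmap_pt {R b X Y dX dY}.
Arguments dmap_le {R b X Y dX dY}.
Arguments lim_le {R b Y dY}.

Theorem corollary10 (R : realType) (b : bool) (X Y : lmodType (scalars R b))
    (dX : X -> X -> R) (dY : Y -> Y -> R) :
  metric_vs dX -> metric_vs dY -> complete_metric dY ->
  Bd_complete_metric_space dX dY.
Proof.
move=> [mX _ _] [mY _ _] cY.
have fin : forall F1 F2, Bd dX dY F1 -> Bd dX dY F2 -> (dmap dX dY F1 F2 < +oo)%E.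
  move=> F1 F2 h1 h2; apply: le_lt_trans (dmap_tri mX mY F1 (fun=> 0) F2) _.
  by rewrite (dmap_sym mX mY (fun=> 0) F2); apply: lte_add_pinfty.
split.
- by move=> F1 F2 h1 h2; rewrite (dmap_ge0 mY) fin.
- by move=> F1 F2 _ _; apply: dmap_eq0.
- by move=> F1 F2 _ _; apply: dmap_sym.
- by move=> F1 F2 F3 _ _ _; apply: dmap_tri.
move=> u uB uC.
have pt : forall x, cauchy_seq dY (fun n => u n x).
  move=> x e e0.
  have d0 : 0 <= dX x 0 by case: mX => h _ _ _; exact: h.
  have k0 : 0 < dX x 0 + 1 by lra.
  have ek0 : 0 < e / 2 / (dX x 0 + 1) by apply: divr_gt0 => //; lra.
  have [N HN] := uC _ ek0; exists N => m n hm hn.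
  apply: le_lt_trans (dmap_pt mX _ _ _ x (ltW ek0) (ltW (HN m n hm hn))) _.
  rewrite divfK; [lra | by rewrite gt_eqF].
have /choice [l Hl] : forall x, exists L, converges_to dY (fun n => u n x) L.
  by move=> x; exact: cY (pt x).
have key : forall e : R, 0 < e -> exists N, forall n, (N <= n)%N ->
    (dmap dX dY (u n) l <= (e / 2)%:E)%E.
  move=> e e0; have e20 : 0 < e / 2 by lra.
  have [N HN] := uC _ e20; exists N => n hn.
  apply/(dmap_le mX); split => [x nx|].
    apply: (lim_le mY _ _ _ _ N (Hl x)) => m hm.
    by have [H1 _] := (dmap_le mX (u n) (u m) (e / 2)).1 (ltW (HN n m hn hm)); exact: H1.
  apply: (lim_le mY _ _ _ _ N (Hl 0)) => m hm.
  by have [_ H2] := (dmap_le mX (u n) (u m) (e / 2)).1 (ltW (HN n m hn hm)).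
exists l.
  have [N HN] := key 1 ltr01.
  rewrite /Bd /=; apply: le_lt_trans (dmap_tri mX mY l (u N) (fun=> 0)) _.
  apply: lte_add_pinfty; last exact: uB N.
  by rewrite (dmap_sym mX mY); apply: le_lt_trans (HN N (leqnn N)) (ltry _).
move=> e e0; have [N HN] := key e e0; exists N => n hn.
by apply: le_lt_trans (HN n hn) _; rewrite lte_fin; lra.
Qed.
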